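(* For every prime power $q$ there exists a linear $(2,\Phi(q),q)$-AONT, i.e. an invertible $\Phi(q)\times\Phi(q)$ matrix over $\mathbb{F}_q$ all of whose $2\times2$ submatrices are invertible.
   Context: $\Phi$ denotes Euler's totient function, so $\Phi(p^r)=p^r-p^{r-1}$. A linear $(t,s,q)$-AONT over $\mathbb{F}_q$ is given by an invertible $s\times s$ matrix $M$ over $\mathbb{F}_q$ (the transform being $(y_1,\dots,y_s)=(x_1,\dots,x_s)M^{-1}$); $M$ defines a linear $(t,s,q)$-AONT iff every $t\times t$ submatrix of $M$ is invertible. *)

(* Defs.v *)
From mathcomp Require Import all_boot all_algebra all_field.
Set Implicit Arguments. Unset Strict Implicit. Unset Printing Implicit Defensive.
Import GRing.Theory.
Local Open Scope ring_scope.

(* Every t x t submatrix of M (choice of t distinct rows and t distinct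
   columns) is invertible. Rows/columns are selected by injective maps;
   reordering rows/columns does not affect invertibility. *)
Definition all_submx_invertible (F : fieldType) (s t : nat) (M : 'M[F]_s) : Prop :=
  forall (f g : 'I_t -> 'I_s), injective f -> injective g ->
    mxsub f g M \in unitmx.

Definition linear_AONT (F : fieldType) (t s : nat) (M : 'M[F]_s) : Prop :=
  M \in unitmx /\ all_submx_invertible t M.

(* Main.v *)
Require Import Defs.
From mathcomp Require Import all_boot all_algebra all_field.
From mathcomp Require Import ring zify.
Set Implicit Arguments. Unset Strict Implicit. Unset Printing Implicit Defensive.
Import GRing.Theory.
Local Open Scope ring_scope.

Section Bin.
Variables (F : fieldType) (p k : nat).
Hypothesis pchar : p \in [pchar F].
Hypothesis k0 : (0 < k)%N.
Let pr : prime p := pcharf_prime pchar.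

Lemma binq0 i : (0 < i < p ^ k)%N -> ('C(p ^ k, i))%:R = 0 :> F.
Proof.
case: i => [|i] // /andP [_ ilt].
apply/eqP; rewrite -(dvdn_pcharf pchar).
apply/negPn/negP => nd.
have := mul_bin_diag (p ^ k) i.
have cop : coprime (p ^ k) 'C(p ^ k, i.+1) by rewrite coprimeXl // prime_coprime.
move=> E.
have : (p ^ k %| i.+1 * 'C(p ^ k, i.+1))%N by rewrite -E dvdn_mulr.
rewrite Gauss_dvdl // => dv; have := dvdn_leq (ltn0Sn i) dv.
by rewrite leqNgt ilt.
Qed.

Lemma binq1 i : (i < p ^ k)%N -> ('C((p ^ k).-1, i))%:R = (-1) ^+ i :> F.
Proof.
elim: i => [|i IH] lt; first by rewrite bin0.
have q1 : ((p ^ k).-1.+1 = p ^ k)%N by rewrite prednK // expn_gt0 prime_gt0.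
have := binS (p ^ k).-1 i; rewrite q1 => E.
have := binq0 (i := i.+1); rewrite lt /= => /(_ isT).
rewrite E natrD IH ?(ltnW lt) // => /eqP; rewrite addr_eq0 => /eqP ->.
by rewrite exprS mulN1r.
Qed.

Lemma binq2 j : (j < (p ^ k).-1)%N -> ('C((p ^ k).-2, j))%:R = (-1) ^+ j * (j.+1)%:R :> F.
Proof.
have q2 : (1 < p ^ k)%N by rewrite -{1}(expn0 p)%N ltn_exp2l ?prime_gt1.
have q1 : ((p ^ k).-2.+1 = (p ^ k).-1)%N by move: q2; case: (p ^ k)%N => [|[|n]].
elim: j => [|j IH] lt; first by rewrite bin0 expr0 mul1r.
have := binS (p ^ k).-2 j; rewrite q1 => E.
have := binq1 (i := j.+1); rewrite (leq_trans lt) ?leq_pred // => /(_ isT).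
rewrite E natrD IH ?(ltnW lt) // => H.
have -> : ('C((p ^ k).-2, j.+1))%:R = (-1) ^+ j.+1 - (-1) ^+ j * (j.+1)%:R :> F.
  by rewrite -H addrK.
rewrite exprS mulN1r -[(j.+2)%:R]natr1 -[(j.+1)%:R]natr1. ring.
Qed.

End Bin.
Lemma det2 (R : comNzRingType) (M : 'M[R]_2) : \det M = M 0 0 * M 1 1 - M 0 1 * M 1 0.
Proof.
rewrite (expand_det_row _ 0) !big_ord_recl big_ord0 /cofactor !det_mx11 !mxE /=.
rewrite addr0 expr0 mul1r expr1.
have -> : lift 0 0 = 1 :> 'I_2 by apply/val_inj.
have -> : lift 1 0 = 0 :> 'I_2 by apply/val_inj.
rewrite /bump /=. ring.
Qed.

Lemma key (F : fieldType) (a b c d : F) : a != b -> c != d ->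
  (a - c)^-1 * (b - d)^-1 - (a - d)^-1 * (b - c)^-1 != 0.
Proof.
move=> ab cd.
have [ac|ac] := eqVneq a c.
  subst c; rewrite subrr invr0 mul0r sub0r oppr_eq0 mulf_neq0 // invr_eq0 subr_eq0 //.
  by rewrite eq_sym.
have [bd|bd] := eqVneq b d.
  subst d; rewrite subrr invr0 mulr0 sub0r oppr_eq0 mulf_neq0 // invr_eq0 subr_eq0 //.
  by rewrite eq_sym.
have [ad|ad] := eqVneq a d.
  subst d; rewrite subrr invr0 mul0r subr0 mulf_neq0 // invr_eq0 subr_eq0 //.
have [bc|bc] := eqVneq b c.
  subst c; rewrite subrr invr0 mulr0 subr0; apply: mulf_neq0; rewrite invr_eq0 subr_eq0 //.
have E : (a - c)^-1 * (b - d)^-1 - (a - d)^-1 * (b - c)^-1 =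
   (a - b) * (d - c) / ((a - c) * (b - d) * (a - d) * (b - c)).
  by field; rewrite !subr_eq0 bc ad bd ac.
by rewrite E !mulf_eq0 invr_eq0 !mulf_eq0 !subr_eq0 (negPf ab) (negPf ac) (negPf bd) (negPf ad) (negPf bc) eq_sym (negPf cd).
Qed.
Section RF.
Variable F : finFieldType.
Local Notation q := #|F|.
Definition xe (i : 'I_q) : F := enum_val i.

Lemma rowfree_mono m (e : 'I_m -> nat) (c : 'I_m -> F) :
  injective e -> (forall j, e j < q)%N -> (forall j, c j != 0) ->
  row_free (\matrix_(j < m, i < q) (c j * xe i ^+ e j)).
Proof.
move=> einj elt cnz.
set M := \matrix_(j < m, i < q) _.
have vec : forall u : 'rV_m, u *m M = 0 -> u = 0.
  move=> u uM.
  pose P : {poly F} := \sum_(j < m) (u 0 j * c j) *: 'X^(e j).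
  have P0 : P = 0.
    apply: (@roots_geq_poly_eq0 _ P (enum F)); last 2 first.
    - exact: enum_uniq.
    - rewrite -cardE; apply: (leq_trans (size_sum _ _ _)).
      apply/bigmax_leqP => j _.
      by rewrite (leq_trans (size_scale_leq _ _)) // size_polyXn.
    apply/allP => x _.
    have := congr1 (fun N : 'rV_q => N 0 (enum_rank x : 'I_q)) uM.
    rewrite !mxE => E.
    rewrite /root horner_sum -[X in _ == X]E; apply/eqP; apply: eq_bigr => j _.
    by rewrite hornerZ hornerXn mxE /xe enum_rankK mulrA.
  apply/rowP => j; rewrite mxE.
  have := congr1 (fun P : {poly F} => P`_(e j)) P0.
  rewrite coef0 coef_sum (bigD1 j) //= big1 ?addr0.
    rewrite coefZ coefXn eqxx mulr1 => /eqP; rewrite mulf_eq0 (negPf (cnz j)) orbF.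
    by move/eqP.
  move=> i ij; rewrite coefZ coefXn.
  have -> : (e j == e i) = false by apply/negP => /eqP /einj /eqP; rewrite eq_sym (negPf ij).
  by rewrite mulr0.
have K0 : kermx M = 0.
  apply/row_matrixP => i; rewrite row0; apply: vec.
  by rewrite -row_mul mulmx_ker row0.
have := mxrank_ker M; rewrite K0 mxrank0 => /esym/eqP.
rewrite subn_eq0 /row_free => H.
by rewrite eqn_leq rank_leq_row H.
Qed.
End RF.

Lemma expf_inv (F : finFieldType) (n : nat) (z : F) :
  #|F| = n.+2 -> (0 < n)%N -> z ^+ n = z^-1.
Proof.
move=> qn n0.
have [->|nz] := eqVneq z 0; first by rewrite expr0n invr0; case: n qn n0.
apply: (mulIf nz); rewrite mulVf // -exprSr.
apply: (mulIf nz); rewrite mul1r -exprSr -qn.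
exact: expf_card.
Qed.

Lemma hv_facts (p k t : nat) : prime p -> (0 < k)%N -> (t < p.-1 * p ^ k.-1)%N ->
  let r := (t %% p.-1)%N in let d := (t %/ p.-1)%N in
  [/\ (r < p.-1)%N, (d < p ^ k.-1)%N, t = (d * p.-1 + r)%N & (p ^ k = p * p ^ k.-1)%N].
Proof.
move=> pr k0 tlt r d.
have p1 : (0 < p.-1)%N by have := prime_gt1 pr; case: p {pr tlt r d} => [|[|]].
split.
- by rewrite ltn_mod.
- by rewrite ltn_divLR // mulnC.
- exact: divn_eq.
- by rewrite -expnS prednK.
Qed.

Theorem theorem2p19 (F : finFieldType) (p k : nat) :
  prime p -> (0 < k)%N -> #|F| = (p ^ k)%N ->
  exists M : 'M[F]_(totient (p ^ k)), linear_AONT 2 M.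
Proof.
move=> pr k0 cardF.
have pch : p \in [pchar F] := card_finPcharP cardF pr.
have p2 : (1 < p)%N := prime_gt1 pr.
set s := totient (p ^ k).
have sE : s = (p.-1 * p ^ k.-1)%N := totient_pfactor pr k0.
set n := (#|F|).-2.
have q2 : (1 < #|F|)%N by rewrite cardF -{1}(expn0 p) ltn_exp2l.
have qn : #|F| = n.+2 by rewrite /n; lia.
pose hv (t : 'I_s) := (t %% p.-1 + p * (t %/ p.-1))%N.
have hvlt : forall t : 'I_s, (hv t < n.+1)%N.
  move=> t; have := ltn_ord t; rewrite {2}sE => tlt.
  have [rl dl te pk] := hv_facts pr k0 tlt.
  rewrite /hv /n cardF pk.
  move: rl dl; set r := (t %% p.-1)%N; set d := (t %/ p.-1)%N; set P := (p ^ k.-1)%N => rl dl.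
  have : (p * d.+1 <= p * P)%N by rewrite leq_mul2l dl orbT.
  nia.
pose h (t : 'I_s) : 'I_n.+1 := Ordinal (hvlt t).
have hinj : injective h.
  move=> t1 t2 /(congr1 val) /= E.
  have := ltn_ord t1; rewrite {2}sE => lt1.
  have := ltn_ord t2; rewrite {2}sE => lt2.
  have [rl1 _ te1 _] := hv_facts pr k0 lt1.
  have [rl2 _ te2 _] := hv_facts pr k0 lt2.
  move: E rl1 rl2 te1 te2; rewrite /hv.
  set r1 := (t1 %% p.-1)%N; set d1 := (t1 %/ p.-1)%N.
  set r2 := (t2 %% p.-1)%N; set d2 := (t2 %/ p.-1)%N => E rl1 rl2 te1 te2.
  have pp : (0 < p)%N by apply: ltnW.
  have D : d1 = d2.
    have := congr1 (fun x => x %/ p)%N E.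
    rewrite ![(_ + p * _)%N]addnC ![(p * _)%N]mulnC !divnMDl // !divn_small ?addn0 //.
    + by apply: (leq_trans rl2); rewrite leq_pred.
    + by apply: (leq_trans rl1); rewrite leq_pred.
  apply/val_inj => /=; rewrite te1 te2 D; rewrite D in E; lia.
have sle : (s <= n.+1)%N.
  by have := @leq_card _ _ h hinj; rewrite !card_ord.
pose A := \matrix_(i < #|F|, j < #|F|) (xe i - xe j) ^+ n.
pose V : 'M[F]_(#|F|, n.+1) := \matrix_(i, l) (xe i ^+ (n - l)).
pose C : 'M[F]_(n.+1, #|F|) := \matrix_(l, j) (((-1) ^+ l *+ 'C(n, l)) * xe j ^+ l).
have AVC : A = V *m C.
  apply/matrixP => i j; rewrite !mxE exprBn; apply: eq_bigr => l _; rewrite !mxE.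
  rewrite mulrnAl mulrnAr; congr (_ *+ _); ring.
have VTfree : row_free V^T.
  have -> : V^T = \matrix_(l < n.+1, i < #|F|) ((fun _ => 1) l * xe i ^+ ((fun l : 'I_n.+1 => n - l)%N l)).
    by apply/matrixP => l i; rewrite !mxE mul1r.
  apply: rowfree_mono => [a b /= E||l]; last by rewrite oner_neq0.
    by apply/val_inj; move: E; case: a b => [a la] [b lb] /= E; lia.
  by move=> l /=; rewrite qn; lia.
pose X := rowsub h C.
have Xfree : row_free X.
  have -> : X = \matrix_(t < s, j < #|F|) ((fun t => (-1) ^+ h t *+ 'C(n, h t)) t * xe j ^+ ((fun t => val (h t)) t)).
    by apply/matrixP => t j; rewrite !mxE.
  apply: rowfree_mono => [a b /= E||t].
  - by apply: hinj; apply: val_inj.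
  - by move=> t /=; rewrite qn; apply: (leq_trans (hvlt t)).
  rewrite -mulr_natr mulf_neq0 ?signr_eq0 //.
  have B : forall j, (j < n.+1)%N -> ('C(n, j))%:R = (-1) ^+ j * (j.+1)%:R :> F.
    move=> j jl; rewrite /n cardF binq2 //.
    by move: jl; rewrite /n cardF; lia.
  rewrite B //.
  rewrite mulf_neq0 ?signr_eq0 // -(dvdn_pcharf pch) /= /hv.
  have := ltn_ord t; rewrite {2}sE => tlt.
  have [rl _ _ _] := hv_facts pr k0 tlt.
  rewrite -addSn addnC (dvdn_addr _ (dvdn_mulr _ (dvdnn p))).
  apply/negP => /dvdn_leq H; have := H (ltn0Sn _).
  by move: rl; lia.
have XTfull : row_full X^T by rewrite /row_full mxrank_tr.
pose g := fullrankfun XTfull.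
have gU : rowsub g X^T \in unitmx := fullrowsub_unit XTfull.
have ginj : injective g := @fullrankfun_inj _ _ _ _ XTfull.
pose Y := colsub g C.
have Yrk : (s <= \rank Y)%N.
  apply: (leq_trans _ (mxrankS (rowsub_sub h Y))).
  have -> : rowsub h Y = (rowsub g X^T)^T by apply/matrixP => i j; rewrite !mxE.
  by rewrite mxrank_tr; move: gU; rewrite -row_free_unit => /eqP ->.
pose Z := colsub g A.
have ZVY : Z = V *m Y.
  rewrite /Z AVC; apply/matrixP => i j; rewrite !mxE; apply: eq_bigr => l _; rewrite !mxE.
  done.
have Zfull : row_full Z.
  rewrite /row_full eqn_leq rank_leq_col /=.
  by rewrite ZVY -mxrank_tr trmx_mul mxrankMfree // mxrank_tr.
pose f := fullrankfun Zfull.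
have fU : rowsub f Z \in unitmx := fullrowsub_unit Zfull.
have finj : injective f := @fullrankfun_inj _ _ _ _ Zfull.
exists (rowsub f Z); split => // f' g' f'inj g'inj.
have s2 : (2 <= s)%N by have := @leq_card _ _ f' f'inj; rewrite !card_ord.
have n0 : (0 < n)%N by lia.
rewrite unitmxE unitfE det2 !mxE !(expf_inv _ qn n0).
have xinj : injective (@xe F) by move=> a b; apply: enum_val_inj.
apply: key.
- by rewrite (inj_eq xinj) (inj_eq finj) (inj_eq f'inj).
- by rewrite (inj_eq xinj) (inj_eq ginj) (inj_eq g'inj).
Qed.
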